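(* Let $X$ be a Banach space and $T\in \mathrm{Lip}_0(X)$. Then $$\sup \operatorname{Re} W(T)=\lim_{t\to 0^+}\frac{\|I+tT\|_L-1}{t},$$ and consequently $$\omega(T)=\max_{\alpha\in \mathbb{T}}\lim_{t\to 0^+}\frac{\|I+t\alpha T\|_L-1}{t}.$$
   Context: $X$ is a Banach space over $\mathbb{K}=\mathbb{R}$ or $\mathbb{C}$; $\mathbb{T}=\{\alpha\in\mathbb{K}:|\alpha|=1\}$; $I$ is the identity map of $X$. $\mathrm{Lip}_0(X)$ is the set of Lipschitz maps $T:X\to X$ with $T(0)=0$, normed by $\|T\|_L=\sup\{\|Tx-Ty\|/\|x-y\|: x,y\in X, x\neq y\}$. For $x\in X$, $D(x)=\{x^*\in X^*: x^*(x)=\|x^*\|\|x\|=\|x\|^2\}$. The Lipschitz numerical range of $T\in\mathrm{Lip}_0(X)$ is $W(T)=\{ f(Tx-Ty)/\|x-y\|^2 : x,y\in X,\ x\neq y,\ f\in D(x-y)\}$ and its numerical radius is $\omega(T)=\sup\{|\lambda|:\lambda\in W(T)\}$. *)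

(* Defs.v *)
From Stdlib Require Import Reals ClassicalEpsilon.
Open Scope R_scope.

Record Cx : Type := mkC { Cre : R; Cim : R }.
Definition Cadd (a b : Cx) : Cx := mkC (Cre a + Cre b) (Cim a + Cim b).
Definition Cmul (a b : Cx) : Cx :=
  mkC (Cre a * Cre b - Cim a * Cim b) (Cre a * Cim b + Cim a * Cre b).
Definition Cabs (a : Cx) : R := sqrt (Cre a * Cre a + Cim a * Cim a).

Inductive kind : Type := RealK | ComplexK.

Definition K (k : kind) : Type :=
  match k with RealK => R | ComplexK => Cx end.

Definition K_add {k : kind} : K k -> K k -> K k :=
  match k return K k -> K k -> K k with RealK => Rplus | ComplexK => Cadd end.
Definition K_mul {k : kind} : K k -> K k -> K k :=
  match k return K k -> K k -> K k with RealK => Rmult | ComplexK => Cmul end.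
Definition K_opp {k : kind} : K k -> K k :=
  match k return K k -> K k with
  | RealK => Ropp | ComplexK => fun a => mkC (- Cre a) (- Cim a) end.
Definition K_of_R {k : kind} : R -> K k :=
  match k return R -> K k with RealK => fun r => r | ComplexK => fun r => mkC r 0 end.
Definition K_abs {k : kind} : K k -> R :=
  match k return K k -> R with RealK => Rabs | ComplexK => Cabs end.
Definition K_re {k : kind} : K k -> R :=
  match k return K k -> R with RealK => fun r => r | ComplexK => Cre end.

Definition in_circle {k : kind} (a : K k) : Prop := K_abs a = 1.

Record NormedSpace (k : kind) : Type := {
  carrier :> Type;
  vzero : carrier;
  vadd : carrier -> carrier -> carrier;
  vopp : carrier -> carrier;
  vscal : K k -> carrier -> carrier;
  vnorm : carrier -> R;
  vadd_assoc : forall x y z, vadd x (vadd y z) = vadd (vadd x y) z;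
  vadd_comm : forall x y, vadd x y = vadd y x;
  vadd_zero : forall x, vadd x vzero = x;
  vadd_opp : forall x, vadd x (vopp x) = vzero;
  vscal_one : forall x, vscal (K_of_R 1) x = x;
  vscal_assoc : forall a b x, vscal a (vscal b x) = vscal (K_mul a b) x;
  vscal_addl : forall a b x, vscal (K_add a b) x = vadd (vscal a x) (vscal b x);
  vscal_addr : forall a x y, vscal a (vadd x y) = vadd (vscal a x) (vscal a y);
  vnorm_zero_iff : forall x, vnorm x = 0 <-> x = vzero;
  vnorm_scal : forall a x, vnorm (vscal a x) = K_abs a * vnorm x;
  vnorm_triangle : forall x y, vnorm (vadd x y) <= vnorm x + vnorm y
}.

Arguments vzero {k} _.
Arguments vadd {k} {_} _ _.
Arguments vopp {k} {_} _.
Arguments vscal {k} {_} _ _.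
Arguments vnorm {k} {_} _.

Definition vsub {k} {X : NormedSpace k} (x y : X) : X := vadd x (vopp y).

Definition complete {k} (X : NormedSpace k) : Prop :=
  forall u : nat -> X,
    (forall eps, 0 < eps -> exists N, forall m n, (N <= m)%nat -> (N <= n)%nat ->
        vnorm (vsub (u m) (u n)) < eps) ->
    exists l : X, forall eps, 0 < eps -> exists N, forall n, (N <= n)%nat ->
        vnorm (vsub (u n) l) < eps.

Definition Banach {k} (X : NormedSpace k) : Prop := complete X.

Definition in_dual {k} {X : NormedSpace k} (f : X -> K k) : Prop :=
  (forall x y, f (vadd x y) = K_add (f x) (f y)) /\
  (forall a x, f (vscal a x) = K_mul a (f x)) /\
  (exists M, forall x, K_abs (f x) <= M * vnorm x).

Definition is_dual_norm {k} {X : NormedSpace k} (f : X -> K k) (r : R) : Prop :=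
  is_lub (fun s => exists x : X, vnorm x <= 1 /\ s = K_abs (f x)) r.

Definition in_D {k} {X : NormedSpace k} (x : X) (f : X -> K k) : Prop :=
  in_dual f /\
  exists nf, is_dual_norm f nf /\
    f x = K_of_R (nf * vnorm x) /\ nf * vnorm x = vnorm x ^ 2.

Definition lipschitz {k} {X : NormedSpace k} (T : X -> X) : Prop :=
  exists M, forall x y, vnorm (vsub (T x) (T y)) <= M * vnorm (vsub x y).

Definition in_Lip0 {k} {X : NormedSpace k} (T : X -> X) : Prop :=
  lipschitz T /\ T (vzero X) = vzero X.

Definition lip_quotients {k} {X : NormedSpace k} (T : X -> X) : R -> Prop :=
  fun s => exists x y : X, x <> y /\
    s = vnorm (vsub (T x) (T y)) / vnorm (vsub x y).

Definition lip_norm {k} {X : NormedSpace k} (T : X -> X) : R :=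
  epsilon (inhabits 0) (fun r => is_lub (lip_quotients T) r).

Definition id_plus {k} {X : NormedSpace k} (c : K k) (T : X -> X) : X -> X :=
  fun x => vadd x (vscal c (T x)).

Definition in_W {k} {X : NormedSpace k} (T : X -> X) (lam : K k) : Prop :=
  exists (x y : X) (f : X -> K k), x <> y /\ in_D (vsub x y) f /\
    lam = K_mul (K_of_R (/ (vnorm (vsub x y) ^ 2))) (f (vsub (T x) (T y))).

Definition is_num_radius {k} {X : NormedSpace k} (T : X -> X) (w : R) : Prop :=
  is_lub (fun s => exists lam, in_W T lam /\ s = K_abs lam) w.

Definition lim_right0 (g : R -> R) (l : R) : Prop :=
  forall eps, 0 < eps -> exists delta, 0 < delta /\
    forall t, 0 < t < delta -> Rabs (g t - l) < eps.

Definition lip_quot {k} {X : NormedSpace k} (c : K k) (T : X -> X) (t : R) : R :=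
  (lip_norm (id_plus (K_mul (K_of_R t) c) T) - 1) / t.

(* Main.v *)
Require Import Defs.
From Stdlib Require Import Reals Lra Psatz ClassicalEpsilon FunctionalExtensionality Classical.
From mathcomp Require classical_sets boolp.
Open Scope R_scope.

Lemma Cx_eq (a b : Cx) : Cre a = Cre b -> Cim a = Cim b -> a = b.
Proof. destruct a, b; simpl; intros -> ->; reflexivity. Qed.

Lemma K_of_R_add {k : kind} (a b : R) : K_add (K_of_R a) (K_of_R b) = (K_of_R (a + b) : K k).
Proof. destruct k; simpl; auto. apply Cx_eq; simpl; ring. Qed.

Lemma K_of_R_mul {k : kind} (a b : R) : K_mul (K_of_R a) (K_of_R b) = (K_of_R (a * b) : K k).
Proof. destruct k; simpl; auto. apply Cx_eq; simpl; ring. Qed.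

Lemma K_mul_comm {k : kind} (a b : K k) : K_mul a b = K_mul b a.
Proof. destruct k; simpl; [ring|]. apply Cx_eq; simpl; ring. Qed.

Lemma K_mul_assoc {k : kind} (a b c : K k) : K_mul a (K_mul b c) = K_mul (K_mul a b) c.
Proof. destruct k; simpl; [ring|]. apply Cx_eq; simpl; ring. Qed.

Lemma K_abs_of_R {k : kind} (r : R) : K_abs (K_of_R r : K k) = Rabs r.
Proof. destruct k; simpl; auto. unfold Cabs; simpl.
  replace (r * r + 0 * 0) with (r * r) by ring. apply sqrt_Rsqr_abs. Qed.

Lemma K_re_of_R {k : kind} (r : R) : K_re (K_of_R r : K k) = r.
Proof. destruct k; reflexivity. Qed.

Lemma Cabs_mul (a b : Cx) : Cabs (Cmul a b) = Cabs a * Cabs b.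
Proof. unfold Cabs; destruct a as [a1 a2], b as [b1 b2]; simpl.
  rewrite <- sqrt_mult by nra. f_equal; ring. Qed.

Lemma K_abs_mul {k : kind} (a b : K k) : K_abs (K_mul a b) = K_abs a * K_abs b.
Proof. destruct k; simpl. apply Rabs_mult. apply Cabs_mul. Qed.

Lemma K_abs_nonneg {k : kind} (a : K k) : 0 <= K_abs a.
Proof. destruct k; simpl. apply Rabs_pos. unfold Cabs; apply sqrt_pos. Qed.

Lemma K_re_add {k : kind} (a b : K k) : K_re (K_add a b) = K_re a + K_re b.
Proof. destruct k; reflexivity. Qed.

Lemma K_re_mulR {k : kind} (r : R) (a : K k) : K_re (K_mul (K_of_R r) a) = r * K_re a.
Proof. destruct k; simpl; ring. Qed.

Lemma K_mulR0 {k : kind} (a : K k) : K_mul (K_of_R 0) a = K_of_R 0.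
Proof. destruct k; simpl; [ring|]. apply Cx_eq; simpl; ring. Qed.

Lemma K_mul1 {k : kind} (a : K k) : K_mul (K_of_R 1) a = a.
Proof. destruct k; simpl; [ring|]. apply Cx_eq; simpl; ring. Qed.

Lemma Cre_le_abs (a : Cx) : Rabs (Cre a) <= Cabs a.
Proof. unfold Cabs. rewrite <- sqrt_Rsqr_abs. apply sqrt_le_1_alt. unfold Rsqr. nra. Qed.
Lemma Cim_le_abs (a : Cx) : Rabs (Cim a) <= Cabs a.
Proof. unfold Cabs. rewrite <- sqrt_Rsqr_abs. apply sqrt_le_1_alt. unfold Rsqr. nra. Qed.

Lemma K_re_le_abs {k : kind} (a : K k) : Rabs (K_re a) <= K_abs a.
Proof. destruct k; simpl. lra. apply Cre_le_abs. Qed.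

Lemma Rabs_le_between (a b : R) : Rabs a <= b -> - b <= a <= b.
Proof. intros H. pose proof (Rle_abs a). pose proof (Rle_abs (-a)). rewrite Rabs_Ropp in H1. lra. Qed.

Arguments vadd_assoc {k n} x y z.
Arguments vadd_comm {k n} x y.
Arguments vadd_zero {k n} x.
Arguments vadd_opp {k n} x.
Arguments vscal_one {k n} x.
Arguments vscal_assoc {k n} a b x.
Arguments vscal_addl {k n} a b x.
Arguments vscal_addr {k n} a x y.
Arguments vnorm_zero_iff {k n} x.
Arguments vnorm_scal {k n} a x.
Arguments vnorm_triangle {k n} x y.

Definition rs {k : kind} {X : NormedSpace k} (r : R) (x : X) : X := vscal (K_of_R r) x.

Lemma vnorm_zero {k} {X : NormedSpace k} : vnorm (vzero X) = 0.
Proof. apply vnorm_zero_iff. reflexivity. Qed.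

Lemma rs_add {k} {X : NormedSpace k} (a b : R) (x : X) : rs (a + b) x = vadd (rs a x) (rs b x).
Proof. unfold rs. rewrite <- vscal_addl, K_of_R_add. reflexivity. Qed.

Lemma rs_rs {k} {X : NormedSpace k} (a b : R) (x : X) : rs a (rs b x) = rs (a * b) x.
Proof. unfold rs. rewrite vscal_assoc, K_of_R_mul. reflexivity. Qed.

Lemma rs_addr {k} {X : NormedSpace k} (a : R) (x y : X) : rs a (vadd x y) = vadd (rs a x) (rs a y).
Proof. unfold rs. apply vscal_addr. Qed.

Lemma rs_one {k} {X : NormedSpace k} (x : X) : rs 1 x = x.
Proof. apply vscal_one. Qed.

Lemma norm_rs {k} {X : NormedSpace k} (a : R) (x : X) : vnorm (rs a x) = Rabs a * vnorm x.
Proof. unfold rs. rewrite vnorm_scal, K_abs_of_R. reflexivity. Qed.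

Lemma rs_zero {k} {X : NormedSpace k} (x : X) : rs 0 x = vzero X.
Proof. apply vnorm_zero_iff. rewrite norm_rs, Rabs_R0. ring. Qed.

Lemma vscal_vzero {k} {X : NormedSpace k} (a : K k) : vscal a (vzero X) = vzero X.
Proof. apply vnorm_zero_iff. rewrite vnorm_scal, vnorm_zero. ring. Qed.

Lemma rs_vzero {k} {X : NormedSpace k} (a : R) : rs a (vzero X) = vzero X.
Proof. apply vscal_vzero. Qed.

Lemma vadd_zero_l {k} {X : NormedSpace k} (x : X) : vadd (vzero X) x = x.
Proof. rewrite vadd_comm; apply vadd_zero. Qed.

Lemma vadd_rsm1 {k} {X : NormedSpace k} (x : X) : vadd x (rs (-1) x) = vzero X.
Proof. rewrite <- (rs_one x) at 1. rewrite <- rs_add. replace (1 + -1) with 0 by ring. apply rs_zero. Qed.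

Lemma vopp_rs {k} {X : NormedSpace k} (x : X) : vopp x = rs (-1) x.
Proof.
  rewrite <- (vadd_zero (vopp x)). rewrite <- (vadd_rsm1 x). rewrite vadd_assoc.
  rewrite (vadd_comm (vopp x) x), vadd_opp. apply vadd_zero_l.
Qed.

Lemma vsub_rs {k} {X : NormedSpace k} (x y : X) : vsub x y = vadd x (rs (-1) y).
Proof. unfold vsub; rewrite vopp_rs; reflexivity. Qed.

Lemma vnorm_nonneg {k} {X : NormedSpace k} (x : X) : 0 <= vnorm x.
Proof.
  pose proof (vnorm_triangle x (rs (-1) x)) as H. rewrite vadd_rsm1, vnorm_zero, norm_rs in H.
  rewrite Rabs_left in H by lra. lra.
Qed.

Lemma vsub_zero_iff {k} {X : NormedSpace k} (x y : X) : vsub x y = vzero X <-> x = y.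
Proof.
  rewrite vsub_rs. split.
  - intro H. rewrite <- (vadd_zero x). rewrite <- (vadd_rsm1 y).
    rewrite (vadd_comm y), vadd_assoc, H. apply vadd_zero_l.
  - intros ->. apply vadd_rsm1.
Qed.

Lemma vswap {k} {X : NormedSpace k} (a b c d : X) :
  vadd (vadd a b) (vadd c d) = vadd (vadd a c) (vadd b d).
Proof.
  rewrite !vadd_assoc. f_equal. rewrite <- !vadd_assoc. f_equal. apply vadd_comm.
Qed.

Lemma J1 {k} {X : NormedSpace k} (x w : X) : vadd (vadd x w) (rs (-1) x) = w.
Proof. rewrite (vadd_comm x w), <- vadd_assoc, vadd_rsm1. apply vadd_zero. Qed.

Lemma J2 {k} {X : NormedSpace k} (x y z : X) s1 s2 :
  vadd (vadd x y) (rs (s1+s2) z) = vadd (vadd x (rs s1 z)) (vadd y (rs s2 z)).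
Proof. rewrite rs_add. apply vswap. Qed.

Lemma J3 {k} {X : NormedSpace k} (x z : X) r s : r <> 0 ->
  vadd (rs r x) (rs s z) = rs r (vadd x (rs (s/r) z)).
Proof. intro Hr. rewrite rs_addr, rs_rs. f_equal. f_equal. field. auto. Qed.

Lemma I1 {k} {X : NormedSpace k} (x y a b : X) t :
  vsub (vadd x (rs t a)) (vadd y (rs t b)) = vadd (vsub x y) (rs t (vsub a b)).
Proof.
  rewrite !vsub_rs, rs_addr, rs_addr, vswap, !rs_rs. f_equal. f_equal. f_equal. ring.
Qed.

Lemma I2 {k} {X : NormedSpace k} (x y v : X) t :
  vsub x (vsub y (rs t v)) = vadd (vsub x y) (rs t v).
Proof.
  rewrite !vsub_rs, rs_addr, !rs_rs, vadd_assoc. f_equal. f_equal. ring.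
Qed.

Lemma I4 {k} {X : NormedSpace k} (al : K k) (a b : X) :
  vsub (vscal al a) (vscal al b) = vscal al (vsub a b).
Proof.
  rewrite !vsub_rs, vscal_addr. f_equal. unfold rs. rewrite !vscal_assoc, K_mul_comm. reflexivity.
Qed.

Lemma I5 {k} {X : NormedSpace k} (a b c : X) : vsub (vsub a b) (vsub a c) = vsub c b.
Proof.
  rewrite !vsub_rs, rs_addr, rs_rs. replace (-1 * -1) with 1 by ring. rewrite rs_one.
  rewrite vswap, vadd_rsm1, vadd_zero_l. apply vadd_comm.
Qed.

Lemma rs_m1_add {k} {X : NormedSpace k} (x y : X) : rs (-1) (vadd x y) = vadd (rs (-1) x) (rs (-1) y).
Proof. apply rs_addr. Qed.

Lemma vscal_rs {k} {X : NormedSpace k} (al : K k) r (x : X) : vscal al (rs r x) = rs r (vscal al x).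
Proof. unfold rs; rewrite !vscal_assoc, K_mul_comm; reflexivity. Qed.

Lemma vsub_norm_sym {k} {X : NormedSpace k} (x y : X) : vnorm (vsub x y) = vnorm (vsub y x).
Proof.
  assert (vsub y x = rs (-1) (vsub x y)) as ->.
  { rewrite !vsub_rs, rs_addr, rs_rs. replace (-1 * -1) with 1 by ring. rewrite rs_one. apply vadd_comm. }
  rewrite norm_rs, Rabs_left by lra. ring.
Qed.

Lemma I6 {k} {X : NormedSpace k} (y v : X) t : vsub (vsub y (rs t v)) y = rs (-t) v.
Proof.
  rewrite !vsub_rs, rs_rs, (vadd_comm y), <- vadd_assoc, vadd_rsm1, vadd_zero.
  f_equal. ring.
Qed.

Definition Rinf (E : R -> Prop) : R := - epsilon (inhabits 0) (fun m => is_lub (fun y => E (-y)) m).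

Lemma Rinf_spec (E : R -> Prop) : (exists a, E a) -> (exists m, forall a, E a -> m <= a) ->
  is_lub (fun y => E (-y)) (- Rinf E).
Proof.
  intros [a Ha] [m Hm]. unfold Rinf. rewrite Ropp_involutive.
  apply epsilon_spec.
  destruct (completeness (fun y => E (-y))) as [l Hl].
  - exists (-m). intros y Hy. apply Hm in Hy. lra.
  - exists (-a). rewrite Ropp_involutive. auto.
  - exists l; exact Hl.
Qed.

Lemma Rinf_lb (E : R -> Prop) : (exists m, forall a, E a -> m <= a) -> forall a, E a -> Rinf E <= a.
Proof.
  intros Hm a Ha. destruct (Rinf_spec E (ex_intro _ a Ha) Hm) as [H1 _].
  assert (-a <= - Rinf E). { apply H1. rewrite Ropp_involutive; auto. } lra.
Qed.

Lemma Rinf_glb (E : R -> Prop) : (exists a, E a) -> forall m, (forall a, E a -> m <= a) -> m <= Rinf E.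
Proof.
  intros Ha m Hm. destruct (Rinf_spec E Ha (ex_intro _ m Hm)) as [_ H2].
  assert (- Rinf E <= -m). { apply H2. intros y Hy. apply Hm in Hy. lra. } lra.
Qed.

Definition sublin {k} {X : NormedSpace k} (q : X -> R) : Prop :=
  (forall x y, q (vadd x y) <= q x + q y) /\ (forall r x, 0 <= r -> q (rs r x) = r * q x).

Lemma sublin_zero {k} {X : NormedSpace k} (q : X -> R) : sublin q -> q (vzero X) = 0.
Proof. intros [_ H]. rewrite <- (rs_zero (vzero X)), H by lra. ring. Qed.

Lemma sublin_neg {k} {X : NormedSpace k} (q : X -> R) : sublin q -> forall x, - q (rs (-1) x) <= q x.
Proof.
  intros Hq x. pose proof (proj1 Hq x (rs (-1) x)) as H. rewrite vadd_rsm1, sublin_zero in H by auto. lra.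
Qed.

Definition hat {k} {X : NormedSpace k} (q : X -> R) (z : X) (x : X) : R :=
  Rinf (fun r => exists s, 0 <= s /\ r = q (vadd x (rs s z)) - s * q z).

Lemma hat_lbnd {k} {X : NormedSpace k} (q : X -> R) (z x : X) : sublin q ->
  exists m, forall a, (exists s, 0 <= s /\ a = q (vadd x (rs s z)) - s * q z) -> m <= a.
Proof.
  intros Hq. exists (- q (rs (-1) x)). intros a [s [Hs ->]].
  pose proof (proj1 Hq (vadd x (rs s z)) (rs (-1) x)) as H. rewrite J1 in H.
  rewrite (proj2 Hq) in H by auto. lra.
Qed.

Lemma hat_le {k} {X : NormedSpace k} (q : X -> R) (z x : X) : sublin q -> hat q z x <= q x.
Proof.
  intros Hq. unfold hat. apply Rinf_lb. apply hat_lbnd; auto.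
  exists 0. split; [lra|]. rewrite rs_zero, vadd_zero. ring.
Qed.

Lemma hat_neg {k} {X : NormedSpace k} (q : X -> R) (z : X) : sublin q -> hat q z (rs (-1) z) <= - q z.
Proof.
  intros Hq. unfold hat. apply Rinf_lb. apply hat_lbnd; auto.
  exists 1. split; [lra|]. rewrite (vadd_comm _ (rs 1 z)), <- (rs_add 1 (-1)).
  replace (1 + -1) with 0 by ring. rewrite rs_zero, sublin_zero by auto. ring.
Qed.

Lemma hat_sublin {k} {X : NormedSpace k} (q : X -> R) (z : X) : sublin q -> sublin (hat q z).
Proof.
  intros Hq. split.
  - intros x y.
    assert (forall a b, (exists s, 0 <= s /\ a = q (vadd x (rs s z)) - s * q z) ->
                        (exists s, 0 <= s /\ b = q (vadd y (rs s z)) - s * q z) ->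
                        hat q z (vadd x y) <= a + b) as Hab.
    { intros a b [s1 [H1 ->]] [s2 [H2 ->]]. unfold hat.
      apply Rle_trans with (q (vadd (vadd x y) (rs (s1 + s2) z)) - (s1 + s2) * q z).
      { apply Rinf_lb. apply hat_lbnd; auto. exists (s1 + s2). split; [lra|auto]. }
      rewrite J2.
      pose proof (proj1 Hq (vadd x (rs s1 z)) (vadd y (rs s2 z))). lra. }
    assert (forall b, (exists s, 0 <= s /\ b = q (vadd y (rs s z)) - s * q z) ->
              hat q z (vadd x y) - b <= hat q z x) as Hb.
    { intros b Hbb. unfold hat at 2. apply Rinf_glb.
      - exists (q (vadd x (rs 0 z)) - 0 * q z). exists 0. split; [lra|auto].
      - intros a Ha. specialize (Hab a b Ha Hbb). lra. }
    assert (hat q z (vadd x y) - hat q z x <= hat q z y).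
    { unfold hat at 3. apply Rinf_glb.
      - exists (q (vadd y (rs 0 z)) - 0 * q z). exists 0. split; [lra|auto].
      - intros b Hbb. specialize (Hb b Hbb). lra. }
    lra.
  - intros r x Hr. destruct (Req_dec r 0) as [->|Hr0].
    + rewrite rs_zero. unfold hat. 
      assert (forall a, (exists s, 0 <= s /\ a = q (vadd (vzero X) (rs s z)) - s * q z) -> a = 0) as H0.
      { intros a [s [Hs ->]]. rewrite vadd_zero_l, (proj2 Hq) by auto. ring. }
      apply Rle_antisym.
      * apply Rinf_lb. apply hat_lbnd; auto. exists 0. split; [lra|]. rewrite rs_zero, vadd_zero, sublin_zero by auto. ring.
      * rewrite Rmult_0_l. apply Rinf_glb. exists 0, 0. split; [lra|]. rewrite rs_zero, vadd_zero, sublin_zero by auto. ring.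
        intros a Ha. rewrite (H0 a Ha). lra.
    + assert (0 < r) as Hrp by lra. apply Rle_antisym.
      * assert (hat q z (rs r x) / r <= hat q z x).
        { unfold hat at 2. apply Rinf_glb.
          - exists (q (vadd x (rs 0 z)) - 0 * q z). exists 0. split; [lra|auto].
          - intros a [s [Hs ->]]. 
            assert (hat q z (rs r x) <= r * (q (vadd x (rs s z)) - s * q z)).
            { unfold hat. apply Rinf_lb. apply hat_lbnd; auto. exists (r * s). split; [nra|].
              rewrite J3 by lra. rewrite (proj2 Hq) by lra. replace (r * s / r) with s by (field; lra). ring. }
            apply (Rmult_le_reg_l r); auto. unfold Rdiv. 
            replace (r * (hat q z (rs r x) * / r)) with (hat q z (rs r x)) by (field; lra). auto. }
        apply (Rmult_le_compat_l r) in H; [|lra]. unfold Rdiv in H.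
        replace (r * (hat q z (rs r x) * / r)) with (hat q z (rs r x)) in H by (field; lra). auto.
      * unfold hat at 1. apply Rinf_glb.
        -- exists (q (vadd (rs r x) (rs 0 z)) - 0 * q z). exists 0. split; [lra|auto].
        -- intros a [s [Hs ->]].
           assert (hat q z x <= q (vadd x (rs (s / r) z)) - (s / r) * q z).
           { apply Rinf_lb. apply hat_lbnd; auto. exists (s / r). split; auto.
             apply Rmult_le_pos; auto. left; apply Rinv_0_lt_compat; auto. }
           rewrite J3 by lra. rewrite (proj2 Hq) by lra.
           apply (Rmult_le_compat_l r) in H; [|lra].
           replace (r * (q (vadd x (rs (s / r) z)) - s / r * q z)) with (r * q (vadd x (rs (s / r) z)) - s * q z) in H by (field; lra).
           exact H.
Qed.

Lemma ab_iff (P : Prop) : boolp.asbool P = true <-> P.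
Proof. symmetry; apply Bool.reflect_iff, boolp.asboolP. Qed.

Lemma ZLp (T : Type) (t0 : T) (R : T -> T -> Prop) :
  (forall t, R t t) -> (forall r s t, R r s -> R s t -> R r t) ->
  (forall A : T -> Prop, (forall s t, A s -> A t -> R s t \/ R t s) -> exists t, forall s, A s -> R s t) ->
  exists t, forall s, R t s -> R s t.
Proof.
intros Hr Ht Hc.
destruct (@classical_sets.ZL_preorder T t0 (fun a b => boolp.asbool (R a b))) as [t Hm].
- intro t; apply ab_iff; auto.
- intros r s t H1 H2; apply (proj1 (ab_iff _)) in H1; apply (proj1 (ab_iff _)) in H2; apply ab_iff; eauto.
- intros A HA. unfold classical_sets.total_on in HA. destruct (Hc A) as [t Ht'].
  + intros s t Hs Ht2; destruct (HA s t Hs Ht2) as [H|H]; [left|right]; apply (proj1 (ab_iff _)); exact H.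
  + exists t; intros s Hs; apply ab_iff; auto.
- exists t; intros s Hs. apply (proj1 (ab_iff _)). unfold classical_sets.premaximal in Hm. apply Hm. apply (proj2 (ab_iff _)). exact Hs.
Qed.

Lemma chain_inf {k} {X : NormedSpace k} (h : X -> R) (C : (X -> R) -> Prop) :
  sublin h -> C h -> (forall c, C c -> sublin c /\ forall x, c x <= h x) ->
  (forall c1 c2, C c1 -> C c2 -> (forall x, c1 x <= c2 x) \/ (forall x, c2 x <= c1 x)) ->
  let m := fun x => Rinf (fun r => exists c, C c /\ r = c x) in
  sublin m /\ (forall c, C c -> forall x, m x <= c x).
Proof.
  intros Hh Ch HC Htot m.
  assert (Hlb : forall x, exists l, forall a, (exists c, C c /\ a = c x) -> l <= a).
  { intros x. exists (- h (rs (-1) x)). intros a [c [Hc ->]].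
    destruct (HC c Hc) as [Hs Hle]. pose proof (sublin_neg c Hs x). pose proof (Hle (rs (-1) x)). lra. }
  assert (Hne : forall x, exists a, exists c, C c /\ a = c x).
  { intros x. exists (h x), h. auto. }
  assert (Hmc : forall c, C c -> forall x, m x <= c x).
  { intros c Hc x. unfold m. apply Rinf_lb; auto. exists c; auto. }
  split; [|exact Hmc]. split.
  - intros x y.
    assert (Hab : forall c1 c2, C c1 -> C c2 -> m (vadd x y) <= c1 x + c2 y).
    { intros c1 c2 H1 H2. destruct (HC c1 H1) as [S1 _], (HC c2 H2) as [S2 _].
      destruct (Htot c1 c2 H1 H2) as [L|L].
      - pose proof (Hmc c1 H1 (vadd x y)). pose proof (proj1 S1 x y). pose proof (L y). lra.
      - pose proof (Hmc c2 H2 (vadd x y)). pose proof (proj1 S2 x y). pose proof (L x). lra. }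
    assert (Hb : forall c2, C c2 -> m (vadd x y) - c2 y <= m x).
    { intros c2 H2. unfold m at 2. apply Rinf_glb; auto.
      intros a [c1 [H1 ->]]. pose proof (Hab c1 c2 H1 H2). lra. }
    assert (m (vadd x y) - m x <= m y).
    { unfold m at 3. apply Rinf_glb; auto. intros a [c2 [H2 ->]]. pose proof (Hb c2 H2). lra. }
    lra.
  - intros r x Hr. destruct (Req_dec r 0) as [->|Hr0].
    + rewrite rs_zero, Rmult_0_l. apply Rle_antisym.
      * pose proof (Hmc h Ch (vzero X)). rewrite (sublin_zero h Hh) in H. auto.
      * unfold m. apply Rinf_glb; auto. intros a [c [Hc ->]]. rewrite (sublin_zero c) by (apply HC; auto). lra.
    + assert (0 < r) by lra. apply Rle_antisym.
      * assert (m (rs r x) / r <= m x).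
        { unfold m at 2. apply Rinf_glb; auto. intros a [c [Hc ->]].
          pose proof (Hmc c Hc (rs r x)). rewrite (proj2 (proj1 (HC c Hc))) in H0 by lra.
          apply (Rmult_le_reg_l r); auto. replace (r * (m (rs r x) / r)) with (m (rs r x)) by (field; lra). auto. }
        apply (Rmult_le_compat_l r) in H0; [|lra].
        replace (r * (m (rs r x) / r)) with (m (rs r x)) in H0 by (field; lra). auto.
      * unfold m at 1. apply Rinf_glb; auto. intros a [c [Hc ->]].
        rewrite (proj2 (proj1 (HC c Hc))) by lra. apply Rmult_le_compat_l; [lra|]. apply (Hmc c Hc x).
Qed.

Lemma norm_sublin {k} {X : NormedSpace k} : sublin (@vnorm k X).
Proof. split. apply vnorm_triangle. intros r x Hr. rewrite norm_rs, Rabs_pos_eq; auto. Qed.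

Lemma HB_real {k} {X : NormedSpace k} (u : X) : exists g : X -> R,
  (forall x y, g (vadd x y) = g x + g y) /\ (forall r x, g (rs r x) = r * g x) /\
  (forall x, g x <= vnorm x) /\ g u = vnorm u.
Proof.
  pose (h := hat vnorm u).
  assert (Hh : sublin h) by (apply hat_sublin, norm_sublin).
  pose (Tq := {q : X -> R | sublin q /\ forall x, q x <= h x}).
  pose (t0 := exist (fun q : X -> R => sublin q /\ forall x, q x <= h x) h (conj Hh (fun x => Rle_refl _)) : Tq).
  destruct (ZLp Tq t0 (fun a b => forall x, proj1_sig b x <= proj1_sig a x)) as [[q [Hq Hqh]] Hmax].
  - intros t x; lra.
  - intros a b c H1 H2 x. specialize (H1 x); specialize (H2 x); lra.
  - intros A HA.
    pose (C := fun c : X -> R => c = h \/ exists a, A a /\ c = proj1_sig a).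
    destruct (chain_inf h C Hh (or_introl eq_refl)) as [Hs Hle].
    + intros c [->|[a [Ha ->]]]. split; auto. intros; lra. destruct a as [a [Ha1 Ha2]]; simpl; auto.
    + intros c1 c2 [->|[a [Ha ->]]] [->|[b [Hb ->]]].
      * left; intros; lra.
      * right; intros x. destruct b as [b [? ?]]; simpl; auto.
      * left; intros x. destruct a as [a [? ?]]; simpl; auto.
      * destruct (HA a b Ha Hb) as [L|L]; [right|left]; exact L.
    + set (m := fun x => Rinf (fun r => exists c, C c /\ r = c x)) in *.
      assert (Hmh : forall x, m x <= h x) by (intros; apply Hle; left; auto).
      exists (exist _ m (conj Hs Hmh)). intros s Hs' x. simpl. apply Hle. right. exists s; auto.
  - simpl in Hmax.
    assert (Hodd : forall z, q (rs (-1) z) = - q z).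
    { intros z.
      assert (Hs : sublin (hat q z)) by (apply hat_sublin; auto).
      assert (Hsh : forall x, hat q z x <= h x).
      { intros x. pose proof (hat_le q z x Hq). pose proof (Hqh x). lra. }
      specialize (Hmax (exist _ (hat q z) (conj Hs Hsh))). simpl in Hmax.
      assert (forall x, q x <= hat q z x) as Hge by (apply Hmax; intros x; apply hat_le; auto).
      pose proof (Hge (rs (-1) z)). pose proof (hat_neg q z Hq). pose proof (sublin_neg q Hq z). lra. }
    assert (Hadd : forall x y, q (vadd x y) = q x + q y).
    { intros x y. apply Rle_antisym. apply (proj1 Hq).
      pose proof (proj1 Hq (rs (-1) x) (rs (-1) y)). rewrite <- rs_addr, !Hodd in H. lra. }
    exists q. split; [exact Hadd|]. split.
    + intros r x. destruct (Rle_dec 0 r). apply (proj2 Hq); auto.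
      replace (rs r x) with (rs (-1) (rs (-r) x)) by (rewrite rs_rs; f_equal; ring).
      rewrite Hodd, (proj2 Hq) by lra. ring.
    + assert (Hhp : forall x, h x <= vnorm x) by (intros; apply hat_le, norm_sublin).
      split.
      * intros x. pose proof (Hqh x); pose proof (Hhp x); lra.
      * apply Rle_antisym. pose proof (Hqh u); pose proof (Hhp u); lra.
        pose proof (Hqh (rs (-1) u)). pose proof (hat_neg vnorm u norm_sublin). fold h in H0.
        rewrite Hodd in H. lra.
Qed.

Lemma vnorm_pos {k} {X : NormedSpace k} (u : X) : u <> vzero X -> 0 < vnorm u.
Proof.
  intros Hu. destruct (vnorm_nonneg u) as [H|H]; auto. exfalso; apply Hu, vnorm_zero_iff; auto.
Qed.

Lemma in_D_of {k} {X : NormedSpace k} (u : X) (f : X -> K k) : u <> vzero X ->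
  (forall x y, f (vadd x y) = K_add (f x) (f y)) ->
  (forall a x, f (vscal a x) = K_mul a (f x)) ->
  (forall x, K_abs (f x) <= vnorm u * vnorm x) ->
  f u = K_of_R (vnorm u * vnorm u) -> in_D u f.
Proof.
  intros Hu Hadd Hmul Hb Hfu. pose proof (vnorm_pos u Hu) as Hn.
  split. { split; [auto|split; [auto|]]. exists (vnorm u). auto. }
  exists (vnorm u). split; [|split; [auto|ring]].
  split.
  - intros s [x [Hx ->]]. pose proof (Hb x). pose proof (vnorm_nonneg x). nra.
  - intros b Hub. apply Hub. exists (rs (/ vnorm u) u). split.
    + rewrite norm_rs, Rabs_pos_eq. right; field; lra. left; apply Rinv_0_lt_compat; auto.
    + unfold rs. rewrite Hmul, K_abs_mul, Hfu, !K_abs_of_R, !Rabs_pos_eq.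
      field; lra. nra. left; apply Rinv_0_lt_compat; auto.
Qed.

Definition iC : Cx := mkC 0 1.

Lemma decompC {X : NormedSpace ComplexK} (p q : R) (x : X) :
  vscal (mkC p q : K ComplexK) x = vadd (rs p x) (rs q (vscal (iC : K ComplexK) x)).
Proof.
  unfold rs. rewrite vscal_assoc, <- vscal_addl. f_equal. simpl. apply Cx_eq; simpl; ring.
Qed.

Lemma HB_D {k} {X : NormedSpace k} (u : X) : u <> vzero X -> exists f : X -> K k, in_D u f.
Proof.
  revert X u. destruct k; intros X u Hu; destruct (HB_real u) as [g [Hadd [Hmul [Hle Hgu]]]];
  pose proof (vnorm_pos u Hu) as Hn.
  - assert (Habs : forall x, Rabs (g x) <= vnorm x).
    { intros x. pose proof (Hle x). pose proof (Hle (rs (-1) x)). rewrite Hmul, norm_rs in H0.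
      rewrite Rabs_left in H0 by lra. apply Rabs_le. lra. }
    exists (fun x => vnorm u * g x). apply in_D_of; auto; simpl.
    + intros; rewrite Hadd; ring.
    + intros a x. change (@vscal RealK X a x) with (rs a x). rewrite Hmul. ring.
    + intros x. rewrite Rabs_mult, Rabs_pos_eq by lra. apply Rmult_le_compat_l; auto; lra.
    + rewrite Hgu; auto.
  - assert (HgC : forall p q x, g (vscal (mkC p q : K ComplexK) x) = p * g x + q * g (vscal (iC : K ComplexK) x)).
    { intros. rewrite decompC, Hadd, !Hmul. ring. }
    assert (Hbd : forall x, sqrt (g x * g x + g (vscal (iC : K ComplexK) x) * g (vscal (iC : K ComplexK) x)) <= vnorm x).
    { intros x. set (a := g x). set (b := g (vscal (iC : K ComplexK) x)).
      set (rho := sqrt (a * a + b * b)).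
      assert (Hr2 : rho * rho = a * a + b * b) by (apply sqrt_sqrt; nra).
      destruct (sqrt_pos (a * a + b * b)) as [Hr|Hr]; fold rho in Hr.
      - pose proof (Hle (vscal (mkC (a / rho) (b / rho) : K ComplexK) x)) as H.
        rewrite HgC, vnorm_scal in H. fold a b in H.
        assert (Hab : a / rho * a + b / rho * b = rho).
        { replace (a / rho * a + b / rho * b) with ((a*a+b*b)/rho) by (field; lra). rewrite <- Hr2. field; lra. }
        assert (Hc : K_abs (mkC (a / rho) (b / rho) : K ComplexK) = 1).
        { simpl. unfold Cabs; simpl. rewrite <- sqrt_1. f_equal.
          replace (a / rho * (a / rho) + b / rho * (b / rho)) with ((a*a+b*b)/(rho*rho)) by (field; lra).
          rewrite <- Hr2. field. lra. }
        rewrite Hc in H. lra.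
      - rewrite <- Hr. apply vnorm_nonneg. }
    assert (Hiu : g (vscal (iC : K ComplexK) u) = 0).
    { pose proof (Hbd u) as H. rewrite Hgu in H.
      set (b := g (vscal (iC : K ComplexK) u)) in *.
      pose proof (sqrt_sqrt (vnorm u * vnorm u + b * b)) as H2.
      pose proof (sqrt_pos (vnorm u * vnorm u + b * b)).
      assert (b * b <= 0) by nra. nra. }
    exists (fun x => mkC (vnorm u * g x) (- (vnorm u * g (vscal (iC : K ComplexK) x)))).
    apply in_D_of; auto; simpl.
    + intros x y. rewrite vscal_addr, !Hadd. apply Cx_eq; simpl; ring.
    + intros [p q] x. rewrite HgC, vscal_assoc.
      replace (K_mul (iC : K ComplexK) (mkC p q : K ComplexK)) with (mkC (-q) p : K ComplexK)
        by (simpl; apply Cx_eq; simpl; ring).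
      rewrite HgC. apply Cx_eq; simpl; ring.
    + intros x. unfold Cabs; simpl.
      replace (vnorm u * g x * (vnorm u * g x) + - (vnorm u * g (vscal (iC : K ComplexK) x)) * - (vnorm u * g (vscal (iC : K ComplexK) x)))
        with ((vnorm u * vnorm u) * (g x * g x + g (vscal (iC : K ComplexK) x) * g (vscal (iC : K ComplexK) x))) by ring.
      rewrite sqrt_mult by nra. rewrite sqrt_square by lra.
      apply Rmult_le_compat_l; [lra|]. apply Hbd.
    + rewrite Hgu, Hiu. apply Cx_eq; simpl; ring.
Qed.

Lemma dual_rs {k} {X : NormedSpace k} (f : X -> K k) : in_dual f ->
  forall r x, f (rs r x) = K_mul (K_of_R r) (f x).
Proof. intros [_ [H _]] r x. apply H. Qed.

Lemma dual_zero {k} {X : NormedSpace k} (f : X -> K k) : in_dual f -> f (vzero X) = K_of_R 0.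
Proof. intros Hf. rewrite <- (rs_zero (vzero X)), dual_rs by auto. apply K_mulR0. Qed.

Lemma dual_re_add {k} {X : NormedSpace k} (f : X -> K k) : in_dual f ->
  forall a b t, K_re (f (vadd a (rs t b))) = K_re (f a) + t * K_re (f b).
Proof. intros Hf a b t. destruct Hf as [Ha [Hm _]]. rewrite Ha, K_re_add. unfold rs. rewrite Hm, K_re_mulR. ring. Qed.

Lemma dual_re_sub {k} {X : NormedSpace k} (f : X -> K k) : in_dual f ->
  forall a b, K_re (f (vsub a b)) = K_re (f a) - K_re (f b).
Proof. intros Hf a b. rewrite vsub_rs, dual_re_add by auto. ring. Qed.

Lemma D_props {k} {X : NormedSpace k} (u : X) (f : X -> K k) : u <> vzero X -> in_D u f ->
  K_re (f u) = vnorm u * vnorm u /\ (forall z, K_abs (f z) <= vnorm u * vnorm z).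
Proof.
  intros Hu [Hf [nf [Hnf [Hfu Hnn]]]]. pose proof (vnorm_pos u Hu) as Hn.
  assert (nf = vnorm u) as ->.
  { apply (Rmult_eq_reg_r (vnorm u)); [|lra]. rewrite Hnn. ring. }
  split. { rewrite Hfu, K_re_of_R. reflexivity. }
  intros z. destruct (classic (z = vzero X)) as [->|Hz].
  - rewrite dual_zero, K_abs_of_R, vnorm_zero, Rabs_R0 by auto. lra.
  - pose proof (vnorm_pos z Hz) as Hzn.
    assert (K_abs (f (rs (/ vnorm z) z)) <= vnorm u).
    { apply (proj1 Hnf). exists (rs (/ vnorm z) z). split; auto.
      rewrite norm_rs, Rabs_pos_eq. right; field; lra. left; apply Rinv_0_lt_compat; auto. }
    rewrite dual_rs, K_abs_mul, K_abs_of_R, Rabs_pos_eq in H by (auto; left; apply Rinv_0_lt_compat; auto).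
    apply (Rmult_le_compat_l (vnorm z)) in H; [|lra].
    replace (vnorm z * (/ vnorm z * K_abs (f z))) with (K_abs (f z)) in H by (field; lra). lra.
Qed.

Lemma lip_norm_spec {k} {X : NormedSpace k} (F : X -> X) : (exists x : X, x <> vzero X) ->
  (exists M, forall x y, vnorm (vsub (F x) (F y)) <= M * vnorm (vsub x y)) ->
  is_lub (lip_quotients F) (lip_norm F).
Proof.
  intros [x0 Hx0] [M HM]. unfold lip_norm. apply epsilon_spec.
  destruct (completeness (lip_quotients F)) as [l Hl].
  - exists M. intros s [x [y [Hxy ->]]].
    assert (vsub x y <> vzero X) by (intro H; apply Hxy, vsub_zero_iff; auto).
    pose proof (vnorm_pos _ H). pose proof (HM x y).
    apply (Rmult_le_reg_r (vnorm (vsub x y))); auto. unfold Rdiv. rewrite Rmult_assoc, Rinv_l by lra. lra.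
  - exists (vnorm (vsub (F x0) (F (vzero X))) / vnorm (vsub x0 (vzero X))). exists x0, (vzero X). auto.
  - exists l; auto.
Qed.

Lemma quot_le {k} {X : NormedSpace k} (F : X -> X) (x y : X) l :
  is_lub (lip_quotients F) l -> x <> y -> vnorm (vsub (F x) (F y)) <= l * vnorm (vsub x y).
Proof.
  intros Hl Hxy. assert (vsub x y <> vzero X) by (intro H; apply Hxy, vsub_zero_iff; auto).
  pose proof (vnorm_pos _ H).
  assert (vnorm (vsub (F x) (F y)) / vnorm (vsub x y) <= l) by (apply (proj1 Hl); exists x, y; auto).
  apply (Rmult_le_compat_r (vnorm (vsub x y))) in H1; [|lra].
  unfold Rdiv in H1. rewrite Rmult_assoc, Rinv_l in H1 by lra. lra.
Qed.

Lemma core {k} {X : NormedSpace k} (S : X -> X) (C : R) :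
  (exists x : X, x <> vzero X) -> 0 <= C ->
  (forall x y, vnorm (vsub (S x) (S y)) <= C * vnorm (vsub x y)) ->
  forall m, is_lub (fun r => exists mu, in_W S mu /\ r = K_re mu) m ->
  lim_right0 (fun t => (lip_norm (fun x => vadd x (rs t (S x))) - 1) / t) m.
Proof.
  intros Hnt HC HS m Hm.
  assert (Hspec : forall t, 0 < t -> is_lub (lip_quotients (fun x => vadd x (rs t (S x))))
                                  (lip_norm (fun x => vadd x (rs t (S x))))).
  { intros t Ht. apply lip_norm_spec; auto. exists (1 + t * C). intros x y.
    rewrite I1. eapply Rle_trans; [apply vnorm_triangle|]. rewrite norm_rs, Rabs_pos_eq by lra.
    pose proof (HS x y). nra. }
  assert (LB : forall t, 0 < t -> m <= (lip_norm (fun x => vadd x (rs t (S x))) - 1) / t).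
  { intros t Ht. set (N := lip_norm (fun x => vadd x (rs t (S x)))).
    apply (proj2 Hm). intros r [mu [[x [y [f [Hxy [HD ->]]]]] ->]].
    set (u := vsub x y) in *. set (v := vsub (S x) (S y)).
    assert (Hu : u <> vzero X) by (intro H; apply Hxy, vsub_zero_iff; auto).
    pose proof (vnorm_pos u Hu) as Hn.
    destruct (D_props u f Hu HD) as [Hfu Hfb].
    pose proof (quot_le _ x y N (Hspec t Ht) Hxy) as Hq. cbv beta in Hq. rewrite I1 in Hq. fold u v in Hq.
    pose proof (dual_re_add f (proj1 HD) u v t) as Hl.
    pose proof (K_re_le_abs (f (vadd u (rs t v)))) as Ha. pose proof (Hfb (vadd u (rs t v))) as Hb.
    apply Rabs_le_between in Ha.
    rewrite K_re_mulR.
    set (n := vnorm u) in *. set (A := vnorm (vadd u (rs t v))) in *. set (B := K_re (f v)) in *.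
    assert (n * A <= n * (N * n)) by (apply Rmult_le_compat_l; lra).
    assert (n * n + t * B <= n * (N * n)) by lra.
    assert (1 + t * (/ (n ^ 2) * B) <= N).
    { apply (Rmult_le_reg_r (n * n)). nra.
      replace ((1 + t * (/ n ^ 2 * B)) * (n * n)) with (n * n + t * B) by (field; lra). nra. }
    apply (Rmult_le_reg_r t); auto. replace ((N - 1) / t * t) with (N - 1) by (field; lra). lra. }
  assert (UB : forall t, 0 < t -> t * m < 1 ->
     lip_norm (fun x => vadd x (rs t (S x))) * (1 - t * m) <= 1 + C * C * (t * t)).
  { intros t Ht Htm. set (N := lip_norm (fun x => vadd x (rs t (S x)))).
    assert (N <= (1 + C * C * (t * t)) / (1 - t * m)).
    { apply (proj2 (Hspec t Ht)). intros s [x [y [Hxy ->]]]. rewrite I1.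
      set (u := vsub x y). set (v := vsub (S x) (S y)).
      assert (Hu : u <> vzero X) by (intro H; apply Hxy, vsub_zero_iff; auto).
      pose proof (vnorm_pos u Hu) as Hn.
      set (u' := vadd u (rs t v)).
      assert (Key : vnorm u' * (1 - t * m) <= vnorm u * (1 + C * C * (t * t))).
      { destruct (classic (u' = vzero X)) as [H0|H0].
        - rewrite H0, vnorm_zero, Rmult_0_l. apply Rmult_le_pos; [lra|]. assert (0 <= C * C * (t * t)) by (apply Rmult_le_pos; nra). lra.
        - pose proof (vnorm_pos u' H0) as Hn'.
          set (y' := vsub y (rs t v)).
          assert (Hxy' : vsub x y' = u') by (unfold y', u', u; apply I2).
          destruct (HB_D u' H0) as [g Hg].
          destruct (D_props u' g H0 Hg) as [Hgu Hgb].
          assert (Hxy2 : x <> y') by (intro E; apply H0; rewrite <- Hxy', E; apply vsub_zero_iff; auto).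
          set (v' := vsub (S x) (S y')).
          assert (Hmu : K_re (K_mul (K_of_R (/ (vnorm (vsub x y') ^ 2))) (g v')) <= m).
          { apply (proj1 Hm). eexists; split; [|reflexivity]. exists x, y', g. rewrite Hxy'. auto. }
          rewrite K_re_mulR, Hxy' in Hmu.
          assert (Hgv' : K_re (g v') <= m * (vnorm u' * vnorm u')).
          { apply (Rmult_le_compat_l (vnorm u' ^ 2)) in Hmu; [|nra].
            replace (vnorm u' ^ 2 * (/ vnorm u' ^ 2 * K_re (g v'))) with (K_re (g v')) in Hmu by (field; lra).
            nra. }
          assert (Hvv : vnorm (vsub v v') <= C * C * t * vnorm u).
          { unfold v, v'. rewrite I5. eapply Rle_trans; [apply HS|].
            unfold y'. rewrite I6, norm_rs, Rabs_left1 by lra. pose proof (HS x y). fold u v in H.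
            rewrite Ropp_involutive. assert (t * vnorm v <= t * (C * vnorm u)) by (apply Rmult_le_compat_l; lra).
            apply (Rmult_le_compat_l C) in H1; [|lra]. lra. }
          pose proof (dual_re_add g (proj1 Hg) u v t) as E1. fold u' in E1.
          pose proof (dual_re_sub g (proj1 Hg) v v') as E2.
          pose proof (K_re_le_abs (g u)) as A1. pose proof (Hgb u) as A2.
          pose proof (K_re_le_abs (g (vsub v v'))) as A3. pose proof (Hgb (vsub v v')) as A4.
          apply Rabs_le_between in A1. apply Rabs_le_between in A3.
          set (n := vnorm u) in *. set (n' := vnorm u') in *.
          assert (n' * n' <= n' * (n + t * m * n' + C * C * (t * t) * n)).
          { assert (K_re (g (vsub v v')) <= n' * (C * C * t * n)).
            { eapply Rle_trans; [|apply Rmult_le_compat_l; [lra|exact Hvv]]. lra. }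
            nra. }
          assert (n' <= n + t * m * n' + C * C * (t * t) * n) by (apply (Rmult_le_reg_l n'); auto).
          nra. }
      fold u'.
      apply (Rmult_le_reg_r (vnorm u)); auto. unfold Rdiv.
      replace (vnorm u' * / vnorm u * vnorm u) with (vnorm u') by (field; lra).
      apply (Rmult_le_reg_r (1 - t * m)); [lra|].
      replace ((1 + C * C * (t * t)) * / (1 - t * m) * vnorm u * (1 - t * m)) with (vnorm u * (1 + C * C * (t * t))) by (field; lra).
      exact Key. }
    apply (Rmult_le_compat_r (1 - t * m)) in H; [|lra].
    unfold Rdiv in H. rewrite Rmult_assoc, Rinv_l in H by lra. lra. }
  intros eps Heps.
  set (K0 := C * C + m * m).
  assert (HK0 : 0 <= K0) by (unfold K0; nra).
  exists (Rmin (/ (2 * (Rabs m + 1))) (eps / (2 * K0 + 1))).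
  assert (Hm1 : 0 < / (2 * (Rabs m + 1))) by (apply Rinv_0_lt_compat; pose proof (Rabs_pos m); lra).
  assert (He1 : 0 < eps / (2 * K0 + 1)) by (apply Rdiv_lt_0_compat; lra).
  split. { apply Rmin_glb_lt; auto. }
  intros t [Ht Htd].
  assert (Ht1 : t < / (2 * (Rabs m + 1))) by (eapply Rlt_le_trans; [exact Htd|apply Rmin_l]).
  assert (Ht2 : t < eps / (2 * K0 + 1)) by (eapply Rlt_le_trans; [exact Htd|apply Rmin_r]).
  assert (Htm : t * Rabs m <= 1/2).
  { apply (Rmult_lt_compat_r (2 * (Rabs m + 1))) in Ht1; [|pose proof (Rabs_pos m); lra].
    rewrite Rinv_l in Ht1 by (pose proof (Rabs_pos m); lra). pose proof (Rabs_pos m). nra. }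
  assert (Htm' : t * m <= 1/2) by (pose proof (Rle_abs m); nra).
  pose proof (LB t Ht) as L. pose proof (UB t Ht ltac:(lra)) as U.
  set (N := lip_norm (fun x => vadd x (rs t (S x)))) in *.
  set (Q := (N - 1) / t) in *.
  assert (HN : N = 1 + t * Q) by (unfold Q; field; lra).
  rewrite HN in U.
  assert (H1 : (Q - m) * (1 - t * m) <= t * K0).
  { unfold K0. assert (t * (Q - m - t * Q * m) <= t * (C * C * t)) by nra.
    assert (Q - m - t * Q * m <= C * C * t) by (apply (Rmult_le_reg_l t); auto; nra). nra. }
  assert (H2 : Q - m <= 2 * t * K0) by nra.
  assert (H3 : 2 * t * K0 < eps).
  { apply (Rmult_lt_compat_r (2 * K0 + 1)) in Ht2; [|lra].
    unfold Rdiv in Ht2. rewrite Rmult_assoc, Rinv_l in Ht2 by lra. nra. }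
  rewrite Rabs_pos_eq by lra. lra.
Qed.

Lemma cont_of_bound (phi : R -> R) (w x0 : R) : 0 <= w ->
  (forall a b, phi a <= phi b + (Rabs (cos a - cos b) + Rabs (sin a - sin b)) * w) ->
  continuity_pt phi x0.
Proof.
  intros Hw Hb eps Heps.
  set (e' := eps / (2 * (w + 1))).
  assert (He' : 0 < e') by (unfold e'; apply Rdiv_lt_0_compat; lra).
  destruct (continuity_cos x0 e' He') as [d1 [Hd1 H1]].
  destruct (continuity_sin x0 e' He') as [d2 [Hd2 H2]].
  exists (Rmin d1 d2). split. { apply Rmin_glb_lt; auto. }
  intros x [Hx Hd]. simpl in *. unfold Rdist in *.
  assert (Hc : Rabs (cos x - cos x0) < e').
  { apply H1. split; auto. eapply Rlt_le_trans; [exact Hd|apply Rmin_l]. }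
  assert (Hs : Rabs (sin x - sin x0) < e').
  { apply H2. split; auto. eapply Rlt_le_trans; [exact Hd|apply Rmin_r]. }
  pose proof (Hb x x0). pose proof (Hb x0 x).
  rewrite (Rabs_minus_sym (cos x0)), (Rabs_minus_sym (sin x0)) in H0.
  assert ((Rabs (cos x - cos x0) + Rabs (sin x - sin x0)) * w <= 2 * e' * w) by nra.
  assert (2 * e' * w < eps).
  { unfold e'. apply (Rmult_lt_reg_r (w + 1)); [lra|].
    replace (2 * (eps / (2 * (w + 1))) * w * (w + 1)) with (eps * w) by (field; lra). nra. }
  apply Rabs_def1; lra.
Qed.

Lemma angle (a b : R) : a * a + b * b = 1 -> exists th, 0 <= th <= 2 * PI /\ cos th = a /\ sin th = b.
Proof.
  intros H. assert (Ha : -1 <= a <= 1) by nra.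
  pose proof (acos_bound a). pose proof PI_RGT_0.
  assert (Hs : sqrt (1 - a²) = Rabs b).
  { rewrite <- sqrt_Rsqr_abs. f_equal. unfold Rsqr. lra. }
  destruct (Rle_dec 0 b).
  - exists (acos a). split; [lra|]. rewrite cos_acos, sin_acos by auto. rewrite Hs, Rabs_pos_eq; auto.
  - exists (2 * PI - acos a). split; [lra|].
    rewrite cos_minus, sin_minus, cos_2PI, sin_2PI, cos_acos, sin_acos by auto. rewrite Hs, Rabs_left by lra.
    split; ring.
Qed.

Lemma is_lub_ext (E F : R -> Prop) l : (forall r, E r <-> F r) -> is_lub E l -> is_lub F l.
Proof.
  intros H [H1 H2]. split.
  - intros r Hr. apply H1, H; auto.
  - intros b Hb. apply H2. intros r Hr. apply Hb, H; auto.
Qed.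

Lemma W_scal {k} {X : NormedSpace k} (T : X -> X) (al mu : K k) :
  in_W (fun x => vscal al (T x)) mu <-> exists lam, in_W T lam /\ mu = K_mul al lam.
Proof.
  split.
  - intros [x [y [f [Hxy [HD ->]]]]]. pose proof (proj1 (proj2 (proj1 HD))) as Hm.
    exists (K_mul (K_of_R (/ vnorm (vsub x y) ^ 2)) (f (vsub (T x) (T y)))). split.
    + exists x, y, f. split; auto.
    + cbv beta. rewrite I4, Hm. rewrite !K_mul_assoc. f_equal. apply K_mul_comm.
  - intros [lam [[x [y [f [Hxy [HD ->]]]]] ->]]. exists x, y, f. split; auto. split; auto.
    pose proof (proj1 (proj2 (proj1 HD))) as Hm. cbv beta. rewrite I4, Hm. rewrite !K_mul_assoc. f_equal. apply K_mul_comm.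
Qed.

Lemma quot_eq {k} {X : NormedSpace k} (al : K k) (T : X -> X) :
  lip_quot al T = fun t => (lip_norm (fun x => vadd x (rs t (vscal al (T x)))) - 1) / t.
Proof.
  apply functional_extensionality. intros t. unfold lip_quot, id_plus. do 3 f_equal.
  apply functional_extensionality. intros x. unfold rs. rewrite vscal_assoc. reflexivity.
Qed.

Lemma W_bound {k} {X : NormedSpace k} (T : X -> X) (C : R) :
  (forall x y, vnorm (vsub (T x) (T y)) <= C * vnorm (vsub x y)) ->
  forall lam, in_W T lam -> K_abs lam <= C.
Proof.
  intros HT lam [x [y [f [Hxy [HD ->]]]]].
  assert (Hu : vsub x y <> vzero X) by (intro H; apply Hxy, vsub_zero_iff; auto).
  pose proof (vnorm_pos _ Hu) as Hn. destruct (D_props _ f Hu HD) as [_ Hb].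
  rewrite K_abs_mul, K_abs_of_R, Rabs_pos_eq by (left; apply Rinv_0_lt_compat; nra).
  pose proof (Hb (vsub (T x) (T y))). pose proof (HT x y).
  set (n := vnorm (vsub x y)) in *.
  assert (K_abs (f (vsub (T x) (T y))) <= n * (C * n)).
  { eapply Rle_trans; [exact H|]. apply Rmult_le_compat_l; lra. }
  apply (Rmult_le_reg_l (n ^ 2)); [nra|].
  replace (n ^ 2 * (/ n ^ 2 * K_abs (f (vsub (T x) (T y))))) with (K_abs (f (vsub (T x) (T y)))) by (field; lra).
  nra.
Qed.

Lemma W_nonempty {k} {X : NormedSpace k} (T : X -> X) : (exists x : X, x <> vzero X) -> exists lam, in_W T lam.
Proof.
  intros [x0 Hx0]. assert (Hu : vsub x0 (vzero X) <> vzero X) by (intro H; apply Hx0, vsub_zero_iff; auto).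
  destruct (HB_D _ Hu) as [f Hf].
  eexists. exists x0, (vzero X), f. split; [auto|]. split; [exact Hf|reflexivity].
Qed.

Theorem theorem2p1 (k : kind) (X : NormedSpace k) (HB : Banach X)
  (Hnt : exists x : X, x <> vzero X)
  (T : X -> X) (HT : in_Lip0 T) :
  (exists L : R,
     lim_right0 (lip_quot (K_of_R 1) T) L /\
     is_lub (fun r => exists lam, in_W T lam /\ r = K_re lam) L) /\
  (exists w : R, is_num_radius T w /\
     (forall alpha : K k, in_circle alpha ->
        exists l, lim_right0 (lip_quot alpha T) l /\ l <= w) /\
     (exists alpha : K k, in_circle alpha /\ lim_right0 (lip_quot alpha T) w)).
Proof.
  destruct HT as [[M0 HM0] _].
  set (C := Rabs M0).
  assert (HC : 0 <= C) by apply Rabs_pos.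
  assert (HTC : forall x y, vnorm (vsub (T x) (T y)) <= C * vnorm (vsub x y)).
  { intros x y. eapply Rle_trans; [apply HM0|]. apply Rmult_le_compat_r; [apply vnorm_nonneg|apply Rle_abs]. }
  set (V := fun (al : K k) r => exists lam, in_W T lam /\ r = K_re (K_mul al lam)).
  assert (LemA : forall al l, is_lub (V al) l -> lim_right0 (lip_quot al T) l).
  { intros al l Hl. rewrite quot_eq. apply (core _ (K_abs al * C) Hnt).
    - apply Rmult_le_pos; auto. apply K_abs_nonneg.
    - intros x y. rewrite I4, vnorm_scal, Rmult_assoc. apply Rmult_le_compat_l; auto. apply K_abs_nonneg.
    - eapply is_lub_ext; [|exact Hl]. intros r. split.
      + intros [lam [Hlam ->]]. exists (K_mul al lam). split; auto. apply W_scal. eauto.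
      + intros [mu [Hmu ->]]. apply W_scal in Hmu. destruct Hmu as [lam [Hlam ->]]. exists lam; auto. }
  destruct (W_nonempty T Hnt) as [lam0 Hlam0].
  assert (LubEx : forall al, exists l, is_lub (V al) l).
  { intros al. destruct (completeness (V al)) as [l Hl].
    - exists (K_abs al * C). intros r [lam [Hlam ->]].
      pose proof (K_re_le_abs (K_mul al lam)). rewrite K_abs_mul in H.
      pose proof (W_bound T C HTC lam Hlam). pose proof (K_abs_nonneg al).
      pose proof (Rle_abs (K_re (K_mul al lam))). nra.
    - exists (K_re (K_mul al lam0)), lam0. auto.
    - exists l; auto. }
  destruct (completeness (fun s => exists lam, in_W T lam /\ s = K_abs lam)) as [w Hw].
  { exists C. intros s [lam [Hlam ->]]. apply (W_bound T C HTC lam Hlam). }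
  { exists (K_abs lam0), lam0. auto. }
  assert (Vle : forall al, in_circle al -> forall r, V al r -> r <= w).
  { intros al Hal r [lam [Hlam ->]]. pose proof (K_re_le_abs (K_mul al lam)).
    rewrite K_abs_mul in H. unfold in_circle in Hal. rewrite Hal, Rmult_1_l in H.
    pose proof (Rle_abs (K_re (K_mul al lam))).
    assert (K_abs lam <= w) by (apply (proj1 Hw); eauto). lra. }
  split.
  { destruct (LubEx (K_of_R 1)) as [L HL]. exists L. split. apply LemA; auto.
    eapply is_lub_ext; [|exact HL]. intros r. unfold V. split.
    - intros [lam [H1 ->]]. rewrite K_mul1. eauto.
    - intros [lam [H1 ->]]. exists lam. rewrite K_mul1. auto. }
  exists w. split; [exact Hw|]. split.
  { intros al Hal. destruct (LubEx al) as [l Hl]. exists l. split. apply LemA; auto.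
    apply (proj2 Hl). intros r Hr. apply (Vle al Hal r Hr). }
  revert C HC HTC V LemA lam0 Hlam0 LubEx Vle Hw.
  destruct k; intros C HC HTC V LemA lam0 Hlam0 LubEx Vle Hw.
  - destruct (LubEx 1) as [l1 H1]. destruct (LubEx (-1)) as [l2 H2].
    assert (Hc1 : @in_circle RealK 1) by (unfold in_circle; simpl; apply Rabs_R1).
    assert (Hc2 : @in_circle RealK (-1)) by (unfold in_circle; simpl; rewrite Rabs_left by lra; lra).
    assert (Hl1 : l1 <= w) by (apply (proj2 H1); intros r Hr; apply (Vle 1 Hc1 r Hr)).
    assert (Hl2 : l2 <= w) by (apply (proj2 H2); intros r Hr; apply (Vle (-1) Hc2 r Hr)).
    assert (Hwm : w <= Rmax l1 l2).
    { apply (proj2 Hw). intros s [lam [Hlam ->]]. simpl.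
      destruct (Rle_dec 0 lam).
      - rewrite Rabs_pos_eq by auto. eapply Rle_trans; [|apply Rmax_l]. apply (proj1 H1).
        exists lam. split; auto. simpl. symmetry; apply Rmult_1_l.
      - rewrite Rabs_left by lra. eapply Rle_trans; [|apply Rmax_r]. apply (proj1 H2).
        exists lam. split; auto. simpl. assert (Hz : forall z : R, - z = -1 * z) by (intro; ring). apply Hz. }
    destruct (Rle_dec l1 l2).
    + exists (-1). split; auto. apply LemA. rewrite Rmax_right in Hwm by auto.
      replace w with l2 by lra. auto.
    + exists 1. split; auto. apply LemA. rewrite Rmax_left in Hwm by lra.
      replace w with l1 by lra. auto.
  - set (e := fun th => (mkC (cos th) (sin th) : K ComplexK)).
    assert (He : forall th, @in_circle ComplexK (e th)).
    { intros th. unfold in_circle; simpl. unfold Cabs; simpl. rewrite <- sqrt_1. f_equal.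
      pose proof (sin2_cos2 th). unfold Rsqr in H. lra. }
    set (phi := fun th => epsilon (inhabits 0) (is_lub (V (e th)))).
    assert (Hphi : forall th, is_lub (V (e th)) (phi th)).
    { intros th. unfold phi. apply epsilon_spec. apply LubEx. }
    assert (Hw0 : 0 <= w).
    { apply Rle_trans with (K_abs lam0). apply K_abs_nonneg. apply (proj1 Hw). eauto. }
    assert (Hcont : forall x0, continuity_pt phi x0).
    { intros x0. apply (cont_of_bound phi w x0 Hw0). intros a b.
      apply (proj2 (Hphi a)). intros r [lam [Hlam ->]].
      assert (Hb : K_re (K_mul (e b) lam) <= phi b) by (apply (proj1 (Hphi b)); exists lam; auto).
      assert (Hl : K_abs lam <= w) by (apply (proj1 Hw); eauto).
      destruct lam as [lr li]. simpl in *.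
      pose proof (Cre_le_abs (mkC lr li)). pose proof (Cim_le_abs (mkC lr li)). simpl in H, H0.
      assert (E : cos a * lr - sin a * li = (cos b * lr - sin b * li) + ((cos a - cos b) * lr - (sin a - sin b) * li)) by ring.
      rewrite E.
      assert ((cos a - cos b) * lr <= Rabs (cos a - cos b) * w).
      { eapply Rle_trans; [apply Rle_abs|]. rewrite Rabs_mult. apply Rmult_le_compat_l; [apply Rabs_pos|lra]. }
      assert (- ((sin a - sin b) * li) <= Rabs (sin a - sin b) * w).
      { eapply Rle_trans; [apply Rle_abs|]. rewrite Rabs_Ropp, Rabs_mult. apply Rmult_le_compat_l; [apply Rabs_pos|lra]. }
      lra. }
    pose proof PI_RGT_0.
    destruct (continuity_ab_maj phi 0 (2 * PI)) as [ts [Hmax Hts]]; [lra|intros; apply Hcont|].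
    exists (e ts). split; auto. apply LemA.
    assert (Hle : phi ts <= w) by (apply (proj2 (Hphi ts)); intros r Hr; apply (Vle (e ts) (He ts) r Hr)).
    assert (Hge : w <= phi ts).
    { apply (proj2 Hw). intros s [lam [Hlam ->]].
      destruct (K_abs_nonneg lam) as [Hp|Hz].
      - destruct lam as [lr li]. simpl in Hp. set (rho := Cabs (mkC lr li)) in *.
        assert (Hr2 : rho * rho = lr * lr + li * li) by (unfold rho, Cabs; simpl; apply sqrt_sqrt; nra).
        destruct (angle (lr / rho) (- li / rho)) as [th [Hth [Hc Hs]]].
        { replace (lr / rho * (lr / rho) + - li / rho * (- li / rho)) with ((lr*lr+li*li)/(rho*rho)) by (field; lra).
          rewrite <- Hr2. field. lra. }
        apply Rle_trans with (phi th); [|apply Hmax; auto].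
        apply (proj1 (Hphi th)). exists (mkC lr li). split; auto. simpl. rewrite Hc, Hs.
        replace (lr / rho * lr - - li / rho * li) with ((lr*lr+li*li)/rho) by (field; lra).
        fold rho. rewrite <- Hr2. field. lra.
      - rewrite <- Hz. apply Rle_trans with (phi 0); [|apply Hmax; lra].
        apply (proj1 (Hphi 0)). exists lam. split; auto.
        pose proof (K_re_le_abs (K_mul (e 0) lam)). rewrite K_abs_mul, <- Hz, Rmult_0_r in H0.
        apply Rabs_le_between in H0. lra. }
    replace w with (phi ts) by lra. apply Hphi.
Qed.
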